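(* Let $C$ be a totally bounded subset of a metric space $(X,d)$ with II-modulus of total boundedness $\gamma$, $T:C\to C$ nonexpansive with $\mathrm{Fix}(T)\ne\emptyset$, $x\in C$, $x_n:=T^nx$, and assume $(x_n)$ is asymptotically regular with rate of asymptotic regularity $\Phi^{++}$. Then for all $k\in\mathbb{N}$ and $g:\mathbb{N}\to\mathbb{N}$ there exists $N\le\Theta:=\Theta_0(\gamma^M(4k+3))+K$ such that for all $i,j\in[N,N+g(N)]$ and all $m\ge N$: $d(x_i,x_j)\le\frac1{k+1}$ and $d(x_m,Tx_m)\le\frac1{k+1}$. Here $K=(\Phi^{++})^M(k)$, $\Theta_0(0)=0$ and $\Theta_0(n+1)=(\Phi^{++})^M\big((g^M(\Theta_0(n)+K)+K)(4k+4)\big)$.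
   Context: II-modulus $\gamma$ for $C$: for every $k$ and every sequence $(y_n)$ in $C$ there are $0\le i<j\le\gamma(k)$ with $d(y_i,y_j)\le\frac1{k+1}$. Nonexpansive: $d(Tx,Ty)\le d(x,y)$. A rate of asymptotic regularity is $\Phi^{++}:\mathbb{N}\to\mathbb{N}$ with $d(x_n,Tx_n)\le\frac1{k+1}$ for all $k$ and all $n\ge\Phi^{++}(k)$. For $f:\mathbb{N}\to\mathbb{N}$, $f^M(n):=\max\{f(i)\mid i\le n\}$. *)

(* Defs.v *)
From Stdlib Require Import Reals Arith Lia.
Open Scope R_scope.

Record is_metric {X : Type} (d : X -> X -> R) : Prop := {
  metric_nonneg : forall x y, 0 <= d x y;
  metric_zero : forall x y, d x y = 0 <-> x = y;
  metric_sym : forall x y, d x y = d y x;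
  metric_triangle : forall x y z, d x z <= d x y + d y z
}.

(* f^M(n) := max { f(i) | i <= n } *)
Fixpoint fmax (f : nat -> nat) (n : nat) : nat :=
  match n with
  | O => f O
  | S n' => Nat.max (fmax f n') (f (S n'))
  end.

Definition II_modulus {X : Type} (d : X -> X -> R) (C : X -> Prop)
  (gamma : nat -> nat) : Prop :=
  forall (k : nat) (y : nat -> X), (forall n, C (y n)) ->
    exists i j, (i < j)%nat /\ (j <= gamma k)%nat /\ d (y i) (y j) <= / INR (k + 1).

Definition maps_into {X : Type} (C : X -> Prop) (T : X -> X) : Prop :=
  forall x, C x -> C (T x).

Definition nonexpansive_on {X : Type} (d : X -> X -> R) (C : X -> Prop)
  (T : X -> X) : Prop :=
  forall x y, C x -> C y -> d (T x) (T y) <= d x y.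

Definition rate_asymp_reg {X : Type} (d : X -> X -> R) (T : X -> X)
  (xs : nat -> X) (Phi : nat -> nat) : Prop :=
  forall k n, (Phi k <= n)%nat -> d (xs n) (T (xs n)) <= / INR (k + 1).

Fixpoint Theta0 (Phi g : nat -> nat) (k : nat) (n : nat) : nat :=
  match n with
  | O => O
  | S n' =>
      let K := fmax Phi k in
      fmax Phi ((fmax g (Theta0 Phi g k n' + K) + K) * (4 * k + 4))
  end.

Definition Theta (Phi g gamma : nat -> nat) (k : nat) : nat :=
  (Theta0 Phi g k (fmax gamma (4 * k + 3)) + fmax Phi k)%nat.

(* Main.v *)
Require Import Defs.
From Stdlib Require Import Reals Arith.
From Stdlib Require Import Lia Lra Psatz.
Open Scope R_scope.

Lemma fmax_ge f n i : (i <= n)%nat -> (f i <= fmax f n)%nat.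
Proof.
  induction n; intros H; simpl.
  - replace i with 0%nat by lia; lia.
  - destruct (Nat.eq_dec i (S n)) as [->|Hne]; [lia|].
    specialize (IHn ltac:(lia)); lia.
Qed.

Lemma fmax_mono f m n : (m <= n)%nat -> (fmax f m <= fmax f n)%nat.
Proof.
  induction 1; [lia|]. simpl. lia.
Qed.

Lemma Theta0_step Phi g k n : (Theta0 Phi g k n <= Theta0 Phi g k (S n))%nat.
Proof.
  induction n; simpl; [lia|].
  apply fmax_mono. apply Nat.mul_le_mono_r. apply Nat.add_le_mono_r.
  apply fmax_mono. simpl in IHn. lia.
Qed.

Lemma Theta0_mono Phi g k m n : (m <= n)%nat ->
  (Theta0 Phi g k m <= Theta0 Phi g k n)%nat.
Proof.
  induction 1; [lia|]. pose proof (Theta0_step Phi g k m0). lia.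
Qed.

Lemma ratio_le (G M c : nat) : (G * c <= M)%nat -> (0 < c)%nat ->
  INR G * / INR (M + 1) <= / INR c.
Proof.
  intros H Hc.
  apply le_INR in H. rewrite mult_INR in H.
  assert (HB : 0 < INR (M + 1)) by (apply lt_0_INR; lia).
  assert (HC : 0 < INR c) by (apply lt_0_INR; lia).
  assert (HM : INR M <= INR (M+1)) by (apply le_INR; lia).
  set (A := INR G) in *. set (B := INR (M+1)) in *. set (Cc := INR c) in *.
  assert (ib : B * / B = 1) by (field; lra).
  assert (ic : Cc * / Cc = 1) by (field; lra).
  assert (pb : 0 < / B) by (apply Rinv_0_lt_compat; lra).
  assert (pc : 0 < / Cc) by (apply Rinv_0_lt_compat; lra).
  assert (A * Cc * (/B * /Cc) <= B * (/B * /Cc)).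
  { apply Rmult_le_compat_r; [nra|lra]. }
  replace (A * Cc * (/B * /Cc)) with (A * /B * (Cc * /Cc)) in H0 by ring.
  replace (B * (/B * /Cc)) with ((B * /B) * /Cc) in H0 by ring.
  rewrite ib, ic in H0. lra.
Qed.

Theorem theorem7p8 (X : Type) (d : X -> X -> R) (C : X -> Prop)
  (gamma : nat -> nat) (T : X -> X) (x : X) (Phi : nat -> nat)
  (Hd : is_metric d)
  (Hgamma : II_modulus d C gamma)
  (HTC : maps_into C T)
  (HT : nonexpansive_on d C T)
  (Hfix : exists p, C p /\ T p = p)
  (Hx : C x)
  (HPhi : rate_asymp_reg d T (fun n => Nat.iter n T x) Phi) :
  forall (k : nat) (g : nat -> nat),
    exists N : nat, (N <= Theta Phi g gamma k)%nat /\
      (forall i j, (N <= i <= N + g N)%nat -> (N <= j <= N + g N)%nat ->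
         d (Nat.iter i T x) (Nat.iter j T x) <= / INR (k + 1)) /\
      (forall m, (N <= m)%nat ->
         d (Nat.iter m T x) (T (Nat.iter m T x)) <= / INR (k + 1)).
Proof.
  intros k g.
  set (xs := fun n => Nat.iter n T x).
  assert (HC : forall n y, C y -> C (Nat.iter n T y)).
  { induction n; intros y Hy; simpl; auto. }
  assert (Hsh : forall t y z, C y -> C z ->
            d (Nat.iter t T y) (Nat.iter t T z) <= d y z).
  { induction t; intros y z Hy Hz; simpl; [lra|].
    eapply Rle_trans; [apply HT; apply HC; auto | apply IHt; auto]. }
  assert (Htel : forall P0 delta, (forall p, (P0 <= p)%nat ->
            d (xs p) (T (xs p)) <= delta) ->
          forall t p, (P0 <= p)%nat -> d (xs p) (xs (t + p)%nat) <= INR t * delta).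
  { intros P0 delta Hst t. induction t; intros p Hp.
    - simpl. rewrite (proj2 (metric_zero d Hd _ _) eq_refl). lra.
    - eapply Rle_trans; [apply (metric_triangle d Hd _ (xs (t+p)%nat))|].
      rewrite S_INR.
      assert (d (xs (t+p)%nat) (xs (S t + p)%nat) <= delta).
      { unfold xs; simpl. apply (Hst (t+p)%nat); lia. }
      specialize (IHt p Hp). lra. }
  set (K := fmax Phi k).
  set (y := fun l => xs (Theta0 Phi g k l + K)%nat).
  destruct (Hgamma (4*k+3)%nat y) as [i [j [Hij [Hjg Hdij]]]].
  { intro n. unfold y, xs. apply HC; auto. }
  set (N := (Theta0 Phi g k i + K)%nat).
  exists N.
  assert (HK : forall m, (N <= m)%nat -> d (xs m) (T (xs m)) <= / INR (k + 1)).
  { intros m Hm. apply HPhi. pose proof (fmax_ge Phi k k (le_n k)). unfold N, K in *. lia. }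
  split; [|split; [|exact HK]].
  { unfold Theta, N, K. apply Nat.add_le_mono_r. apply Theta0_mono.
    pose proof (fmax_ge gamma (4*k+3) (4*k+3) (le_n _)). lia. }
  set (nj := (Theta0 Phi g k j + K)%nat).
  assert (Hnij : (N <= nj)%nat) by (unfold N, nj; pose proof (Theta0_mono Phi g k i j ltac:(lia)); lia).
  set (s := (nj - N)%nat).
  set (G := g N).
  set (M := ((fmax g N + K) * (4 * k + 4))%nat).
  assert (HstepM : forall p, (nj <= p)%nat -> d (xs p) (T (xs p)) <= / INR (M + 1)).
  { intros p Hp. apply HPhi.
    assert (Theta0 Phi g k (S i) <= Theta0 Phi g k j)%nat by (apply Theta0_mono; lia).
    assert (E : Theta0 Phi g k (S i) = fmax Phi M) by reflexivity.
    pose proof (fmax_ge Phi M M (le_n _)). unfold nj in Hp. lia. }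
  assert (Hshift : forall a, (N <= a <= N + G)%nat ->
            d (xs a) (xs (a - N + nj)%nat) <= / INR (4*k+3+1)).
  { intros a Ha.
    assert (E1 : xs a = Nat.iter (a - N) T (xs N)).
    { unfold xs. rewrite <- Nat.iter_add. f_equal. lia. }
    assert (E2 : xs (a - N + nj)%nat = Nat.iter (a - N) T (xs nj)).
    { unfold xs. rewrite <- Nat.iter_add. reflexivity. }
    rewrite E1, E2. unfold xs. eapply Rle_trans; [apply Hsh; apply HC; auto|].
    exact Hdij. }
  assert (Hmid : forall u v, (u <= G)%nat -> (v <= G)%nat ->
            d (xs (u + nj)%nat) (xs (v + nj)%nat) <= INR G * / INR (M+1)).
  { assert (Hp : forall u v, (u <= v)%nat -> (v <= G)%nat ->
              d (xs (u + nj)%nat) (xs (v + nj)%nat) <= INR G * / INR (M+1)).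
    { intros u v Huv HvG.
      pose proof (Htel nj (/ INR (M+1)) HstepM (v - u)%nat (u + nj)%nat ltac:(lia)) as H.
      replace (v - u + (u + nj))%nat with (v + nj)%nat in H by lia.
      eapply Rle_trans; [exact H|].
      apply Rmult_le_compat_r.
      - left; apply Rinv_0_lt_compat, lt_0_INR; lia.
      - apply le_INR; lia. }
    intros u v Hu Hv. destruct (le_lt_dec u v).
    - apply Hp; auto.
    - rewrite (metric_sym d Hd). apply Hp; lia. }
  assert (Hrat : INR G * / INR (M+1) <= / INR (4*k+3+1)).
  { apply ratio_le; [|lia]. unfold M.
    pose proof (fmax_ge g N N (le_n _)). fold G in H.
    replace (4*k+3+1)%nat with (4*k+4)%nat by lia. nia. }
  assert (H4 : INR (4*k+3+1) = 4 * INR (k+1)).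
  { replace (4*k+3+1)%nat with (4*(k+1))%nat by lia. rewrite mult_INR. simpl. lra. }
  assert (Hpos : 0 < INR (k+1)) by (apply lt_0_INR; lia).
  assert (Hfin : 3 * / INR (4*k+3+1) <= / INR (k+1)).
  { rewrite H4, Rinv_mult.
    assert (0 < / INR (k+1)) by (apply Rinv_0_lt_compat; lra). lra. }
  intros a b Ha Hb. fold G in Ha, Hb.
  change (d (xs a) (xs b) <= / INR (k+1)).
  pose proof (Hshift a Ha). pose proof (Hshift b Hb).
  pose proof (Hmid (a - N)%nat (b - N)%nat ltac:(lia) ltac:(lia)).
  eapply Rle_trans; [apply (metric_triangle d Hd _ (xs (a - N + nj)%nat))|].
  eapply Rle_trans; [apply Rplus_le_compat_l, (metric_triangle d Hd _ (xs (b - N + nj)%nat))|].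
  rewrite (metric_sym d Hd (xs (b - N + nj)%nat)). lra.
Qed.
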